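(* Let $G=(V,E)$ be an instance of the cycle highway problem with a single valuation (all valuations equal to $1$). Let $\mathbf p$ be the price vector output by the algorithm Cyc_Single_Val described in the context. Then \[ \mathrm{Opt}_{\rm coup}(G)\le 2.747\cdot\mathrm{Profit}_{\rm coup}(\mathbf p). \]
   Context: A (reduced) instance of the cycle highway problem is given by items $V=[1,n]=\{1,\dots,n\}$ arranged on a cycle $1\to2\to\dots\to n\to1$ and a finite multiset $E=\{e_1,\dots,e_m\}$ of customers, each a contiguous arc of the cycle ($[j_s,j_t]$ or $[j_t,n]\cup[1,j_s]$ with $1\le j_s\le j_t\le n$), each with valuation $w_j$; ''single valuation'' means all $w_j$ are equal, normalized to $w_j=1$. The line highway problem is the special case where items form a line and each customer is an interval of it. For a price vector $\mathbf p\in\mathbb R^n$ (negative prices allowed), $p(e_j)=\sum_{i\in e_j}p_i$, $\mathrm{Profit}_{\rm coup}(\mathbf p)=\sum_{j:\,w_j\ge p(e_j)}\max\{p(e_j),0\}$, $\mathrm{Opt}_{\rm coup}(G)=\max_{\mathbf p}\mathrm{Profit}_{\rm coup}(\mathbf p)$. For a line instance on items $1,\dots,k$, its DAG representation has vertices $u_0,\dots,u_k$ and an arc $u_{a-1}\to u_c$ for each customer $[a,c]$; partial sums $s_0,\dots,s_k$ give prices $p_i=s_i-s_{i-1}$. Subroutine BBCH (Balcan et al.): on a line instance with all valuations $1$, compute a directed cut $(A,B)$ of the DAG representation using the Feige–Goemans max-directed-cut approximation algorithm, with $u_0$ placed in $A$ (moving $u_0$, which has no incoming arcs, to $A$ never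 loses cut arcs); set partial sums $0$ on $A$ and $1$ on $B$; output the induced prices. It is known (Balcan et al.) that its coupon profit is at least $\mathrm{Opt}_{\rm coup}/a$ with $a\approx 2.33$. Algorithm Cyc_Single_Val: (1) choose an item $h\in V$ arbitrarily; (2) let $E_{\rm in}$ be the customers containing $h$ and $V_{\rm in}$ the union of their items; (3) let $E_{\rm out}$ be the customers not containing $h$ and $V_{\rm out}$ the union of their items; (4) let $\boldsymbol\sigma$ give price $1$ to $h$ and $0$ to every other item; (5) regard $G_{\rm out}=(V_{\rm out},E_{\rm out})$ as a line highway instance with single valuation (items of $V_{\rm out}$ ordered along the cycle starting just after $h$); (6) run BBCH on $G_{\rm out}$ to get prices $\boldsymbol\tau_{\rm out}$ on $V_{\rm out}$; (7) for each $x\in\{-1,0,1,2\}$ let $\boldsymbol\tau^x_{\rm in}$ give price $x$ to $h$ and $0$ to all items of $V_{\rm in}\setminus(V_{\rm out}\cup\{h\})$, choose $\boldsymbol\tau_{\rm in}$ among these maximizing coupon profit, and let $\boldsymbol\tau=(\boldsymbol\tau_{\rm out},\boldsymbol\tau_{\rm in})$ (items in neither set priced $0$); (8) output $\mathbf p\in\{\boldsymbol\sigma,\boldsymbol\tau\}$ with larger $\mathrm{Profit}_{\rm coup}$. *)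

(* Defs.v *)
From mathcomp Require Import all_boot all_order all_algebra.
From mathcomp Require Import reals.
Set Implicit Arguments. Unset Strict Implicit. Unset Printing Implicit Defensive.
Import Order.TTheory GRing.Theory Num.Theory.
Local Open Scope ring_scope.

(* A customer: an arc of the cycle 1 -> 2 -> ... -> n -> 1 given by
   1 <= cs <= ct <= n; if cwrap = false it is [cs, ct], otherwise it is
   [ct, n] \cup [1, cs]. *)
Record customer := Customer { cs : nat; ct : nat; cwrap : bool }.

Definition valid_cust (n : nat) (e : customer) : bool :=
  (1 <= cs e)%N && (cs e <= ct e)%N && (ct e <= n)%N.

Definition in_cust (n : nat) (e : customer) (i : nat) : bool :=
  if cwrap e then ((ct e <= i)%N && (i <= n)%N) || ((1 <= i)%N && (i <= cs e)%N)
  else (cs e <= i)%N && (i <= ct e)%N.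

Section Prices.
Variable R : realType.

(* price vectors are functions nat -> R, only items 1..n matter *)
Definition pe (n : nat) (p : nat -> R) (e : customer) : R :=
  \sum_(1 <= i < n.+1 | in_cust n e i) p i.

Definition profit_coup (n : nat) (E : seq customer) (p : nat -> R) : R :=
  \sum_(e <- E) (if pe n p e <= 1 then Num.max (pe n p e) 0 else 0).

Definition sigma_price (h : nat) : nat -> R := fun i => if i == h then 1 else 0.
End Prices.

Definition E_in (n h : nat) (E : seq customer) := [seq e <- E | in_cust n e h].
Definition E_out (n h : nat) (E : seq customer) := [seq e <- E | ~~ in_cust n e h].

(* items other than h in the cycle order starting just after h:
   h+1, ..., n, 1, ..., h-1 *)
Definition lineseq (n h : nat) : seq nat :=
  [seq ((h + j).-1 %% n).+1 | j <- iota 1 n.-1].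

Definition Vout (n h : nat) (E : seq customer) : seq nat :=
  [seq i <- lineseq n h | has (fun e => in_cust n e i) (E_out n h E)].

(* DAG representation of G_out on vertices u_0..u_k: a customer of E_out whose
   items are v_a, ..., v_c gives the arc u_(a-1) -> u_c; we return (a-1, c). *)
Definition dag_arc (n h : nat) (E : seq customer) (e : customer) : nat * nat :=
  let vo := Vout n h E in
  let a1 := find (in_cust n e) vo in
  (a1, (a1 + count (in_cust n e) vo)%N).

(* value of the directed cut (A, B) where B = {u_j | Bset j}: number of arcs
   (with multiplicity) going from A to B *)
Definition dicut_value (n h : nat) (E : seq customer) (Bset : nat -> bool) : nat :=
  count (fun e => ~~ Bset (dag_arc n h E e).1 && Bset (dag_arc n h E e).2)
        (E_out n h E).

Section Tau.
Variable R : realType.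

(* partial sums s_j = [u_j \in B]; price of v_j is s_j - s_(j-1);
   tau^x: price x on h, tau_out on V_out, 0 elsewhere *)
Definition tau_price (n h : nat) (E : seq customer) (Bset : nat -> bool) (x : R)
  : nat -> R :=
  fun i =>
    if i == h then x
    else let vo := Vout n h E in
         if i \in vo then
           let j := (index i vo).+1 in
           ((Bset j)%:R - (Bset j.-1)%:R)
         else 0.
End Tau.

(* Feige--Goemans approximation ratio for MAX DICUT *)
Definition FG_ratio {R : realType} : R := 859%:R / 1000%:R.

(* Main.v *)
From HB Require Import structures.
Require Import Defs.
From mathcomp Require Import all_boot all_order all_algebra.
From mathcomp Require Import reals.
From mathcomp Require Import zify ring lra.
Import Order.TTheory GRing.Theory Num.Theory.
Definition cenc (c : customer) := (cs c, ct c, cwrap c).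
Definition cdec (t : nat * nat * bool) := Customer t.1.1 t.1.2 t.2.
Lemma cencK : cancel cenc cdec. Proof. by case. Qed.
HB.instance Definition _ := Equality.copy customer (can_type cencK).

Lemma block_gen (T : eqType) (x0 : T) (P : pred T) (s : seq T) :
  (forall i j l, i <= j -> j <= l -> l < size s ->
     P (nth x0 s i) -> P (nth x0 s l) -> P (nth x0 s j)) ->
  filter P s = take (count P s) (drop (find P s) s).
Proof.
elim: s => [|x s IH] //= Hc.
have Hc' : forall i j l, i <= j -> j <= l -> l < size s ->
     P (nth x0 s i) -> P (nth x0 s l) -> P (nth x0 s j).
  move=> i j l H1 H2 H3 H4 H5.
  exact: (Hc i.+1 j.+1 l.+1).
case: ifP => Px.
- rewrite drop0 add1n /=; congr cons.
  rewrite IH //.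
  case Ec: (count P s) => [|c]; first by rewrite !take0.
  case Ef: (find P s) => [|f]; first by rewrite drop0.
  exfalso.
  have Hfs : f.+1 < size s by rewrite -Ef -has_find has_count Ec.
  have Pf : P (nth x0 s f.+1) by rewrite -Ef; apply: nth_find; rewrite has_count Ec.
  have P0 : P (nth x0 s 0) by exact: (Hc 0 1 f.+2 isT isT Hfs Px Pf).
  by have := before_find x0 (a:=P) (s:=s) (i:=0); rewrite Ef P0 => H; have := H isT.
- by rewrite add0n /= IH.
Qed.

Section Struct.
Variables (n h : nat) (E : seq customer).
Hypothesis Hh : (1 <= h <= n)%N.

Definition f j := ((h + j).-1 %% n).+1.

Lemma fE j : 1 <= j <= n.-1 -> f j = if h + j <= n then h+j else h+j-n.
Proof. move=> H2; rewrite /f. case: ifP => H3.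
 rewrite modn_small; lia.
 have -> : (h+j).-1 = (h + j - n).-1 + n by lia.
 rewrite modnDr modn_small; lia. Qed.

Definition Qf i := has (fun e => in_cust n e i) (E_out n h E).
Definition sJ := [seq j <- iota 1 n.-1 | Qf (f j)].

Lemma voE : Vout n h E = map f sJ.
Proof. by rewrite /Vout /lineseq filter_map. Qed.

Lemma f_inj : {in iota 1 n.-1 &, injective f}.
Proof. move=> a b; rewrite !mem_iota => Ha Hb; rewrite !fE; try lia.
 case: ifP; case: ifP; lia. Qed.

Lemma vo_uniq : uniq (Vout n h E).
Proof. rewrite voE map_inj_in_uniq ?filter_uniq ?iota_uniq //.
 move=> a b; rewrite !mem_filter => /andP[_ Ha] /andP[_ Hb]; exact: f_inj. Qed.

Lemma f_range j : 1 <= j <= n.-1 -> (1 <= f j <= n) && (f j != h).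
Proof. move=> H; rewrite fE //; case: ifP; lia. Qed.

Lemma vo_mem i : i \in Vout n h E -> (1 <= i <= n) && (i != h).
Proof. rewrite voE => /mapP[j]; rewrite mem_filter mem_iota => /andP[_ Hj] ->.
 exact: f_range. Qed.

Lemma line_mem i : 1 <= i <= n -> i != h -> i \in lineseq n h.
Proof. move=> H1 H2; apply/mapP.
 exists (if h < i then i - h else i + n - h); first by rewrite mem_iota; case: ifP; lia.
 rewrite -/(f _) fE; [case: ifP; case: ifP; lia | case: ifP; lia]. Qed.

Lemma sum_vo (R : realType) (P : pred nat) (g : nat -> R) :
  (\sum_(i <- Vout n h E | P i) g i = \sum_(1 <= i < n.+1 | P i && (i \in Vout n h E)) g i)%R.
Proof.
rewrite -[LHS]big_filter -[RHS]big_filter /index_iota subSS subn0; apply: perm_big.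
apply: uniq_perm; [by rewrite (filter_uniq _ vo_uniq)|by rewrite filter_uniq // iota_uniq|].
move=> i; rewrite [LHS]mem_filter [RHS]mem_filter mem_iota.
case Hv: (i \in Vout n h E); rewrite ?andbF ?andbT ?andbF //.
have := vo_mem i Hv; case: (P i) => /= /andP[H _]; lia.
Qed.

Lemma convex_vo (P : pred nat) :
  (forall j1 j2 j3, 1 <= j1 -> j1 <= j2 -> j2 <= j3 -> j3 <= n.-1 ->
     P (f j1) -> P (f j3) -> P (f j2)) ->
  filter P (Vout n h E) = take (count P (Vout n h E)) (drop (find P (Vout n h E)) (Vout n h E)).
Proof.
move=> Hc; apply: (@block_gen _ 0) => i j l H1 H2 H3.
rewrite voE size_map in H3; rewrite voE !(nth_map 0); try lia.
have Hs : sorted leq sJ by apply: sorted_filter; [exact: leq_trans| exact: iota_sorted].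
have Hin : forall k, k < size sJ -> 1 <= nth 0 sJ k <= n.-1.
  rewrite /sJ => k Hk; have := mem_nth 0 Hk; rewrite mem_filter mem_iota => /andP[_]; case/andP => A B; rewrite A /=; by rewrite -ltnS -add1n.
apply: (Hc (nth 0 sJ i) _ (nth 0 sJ l)).
- have := Hin i; lia.
- apply: (sorted_leq_nth leq_trans leqnn 0 Hs) => //; rewrite inE; lia.
- apply: (sorted_leq_nth leq_trans leqnn 0 Hs) => //; rewrite inE; lia.
- have := Hin l; lia.
Qed.

End Struct.
Lemma out_conv n h e : 1 <= h <= n -> valid_cust n e -> ~~ in_cust n e h ->
  forall j1 j2 j3, 1 <= j1 -> j1 <= j2 -> j2 <= j3 -> j3 <= n.-1 ->
  in_cust n e (f n h j1) -> in_cust n e (f n h j3) -> in_cust n e (f n h j2).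
Proof.
move=> Hh Hv Hn j1 j2 j3 H1 H2 H3 H4.
rewrite !fE; try lia. move: Hv Hn; rewrite /valid_cust /in_cust.
case: (cwrap e); case: ifP; case: ifP; case: ifP; lia.
Qed.
Lemma in_conv n h e : 1 <= h <= n -> valid_cust n e -> in_cust n e h ->
  forall j1 j2 j3, 1 <= j1 -> j1 <= j2 -> j2 <= j3 -> j3 <= n.-1 ->
  ~~ in_cust n e (f n h j1) -> ~~ in_cust n e (f n h j3) -> ~~ in_cust n e (f n h j2).
Proof.
move=> Hh Hv Hn j1 j2 j3 H1 H2 H3 H4.
rewrite !fE; try lia. move: Hv Hn; rewrite /valid_cust /in_cust.
case: (cwrap e); case: ifP; case: ifP; case: ifP; lia.
Qed.

Local Open Scope ring_scope.

Lemma tele_block (R : realType) (s : seq nat) (g u : nat -> R) a c :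
  (a + c <= size s)%N -> (forall j, (j < size s)%N -> g (nth 0%N s j) = u j.+1 - u j) ->
  \sum_(i <- take c (drop a s)) g i = u (a + c)%N - u a.
Proof.
move=> Hs Hg; rewrite (big_nth 0%N) size_take size_drop.
have -> : (if c < size s - a then c else size s - a)%N = c by case: ifP; lia.
rewrite big_mkord.
transitivity (\sum_(j < c) (u (a + j.+1)%N - u (a + j)%N)).
  apply: eq_bigr => [[j Hj]] _ /=.
  rewrite nth_take // nth_drop Hg; last lia. by rewrite addnS.
rewrite -(big_mkord xpredT (fun j => u (a + j.+1)%N - u (a + j)%N)).
by rewrite telescope_sumr // addn0.
Qed.

Lemma block_sum (R : realType) (s : seq nat) (P : pred nat) (g u : nat -> R) :
  filter P s = take (count P s) (drop (find P s) s) ->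
  (forall j, (j < size s)%N -> g (nth 0%N s j) = u j.+1 - u j) ->
  \sum_(i <- s | P i) g i = u (find P s + count P s)%N - u (find P s).
Proof.
move=> Hf Hg; rewrite -big_filter Hf; apply: tele_block => //.
have : size (filter P s) = count P s by rewrite size_filter.
rewrite Hf size_take size_drop. have := find_size P s. case: ifP; lia.
Qed.

Lemma full_sum (R : realType) (s : seq nat) (g u : nat -> R) :
  (forall j, (j < size s)%N -> g (nth 0%N s j) = u j.+1 - u j) ->
  \sum_(i <- s) g i = u (size s) - u 0%N.
Proof.
move=> Hg; have := @tele_block R s g u 0 (size s) (leqnn _) Hg.
by rewrite drop0 take_size.
Qed.

Lemma hermite_nat (m Y : nat) : (0 < m)%N -> (\sum_(k < m) ((Y + k) %/ m))%N = Y.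
Proof.
move=> Hm; elim: Y => [|Y IH].
  rewrite big1 // => [[k Hk]] _ /=; rewrite add0n divn_small //.
have H1 := @big_ord_recl nat 0%N addn m (fun k => (Y + k) %/ m)%N.
have H2 := @big_ord_recr nat 0%N addn m (fun k => (Y + k) %/ m)%N.
rewrite H2 /= in H1.
have E1 : (\sum_(k < m) (Y.+1 + k) %/ m = \sum_(i < m) (Y + bump 0 i) %/ m)%N.
  by apply: eq_bigr => i _; rewrite /bump /= addSnnS add1n.
have E2 : (\sum_(i < m) (Y + widen_ord (leqnSn m) i) %/ m = \sum_(i < m) (Y + i) %/ m)%N.
  by apply: eq_bigr.
have E3 : ((Y + m) %/ m = Y %/ m + 1)%N by rewrite -{1}(mul1n m) divnDMl.
rewrite E1; rewrite E2 IH E3 addn0 in H1; move: H1 => /eqP; rewrite addnC -addnA eqn_add2l => /eqP <-; lia.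
Qed.

Lemma hermite_int (m : nat) (Y : int) : (0 < m)%N -> \sum_(k < m) ((Y + k%:Z) %/ m%:Z)%Z = Y.
Proof.
move=> Hm.
have HW : 0 <= Y + (`|Y|%N * m)%N%:Z.
  case: Y => y /=; first by nia.
  rewrite NegzE; nia.
set T := `|Y|%N.
have [W HW'] : exists W : nat, Y + (T * m)%N%:Z = W%:Z.
  by exists (absz (Y + (T * m)%N%:Z)); rewrite gez0_abs.
have E : forall k : nat, ((Y + k%:Z) %/ m%:Z)%Z = ((W + k)%N %/ m)%N%:Z - T%:Z.
  move=> k; rewrite -divz_nat PoszD -HW'.
  have -> : Y + (T * m)%N%:Z + k%:Z = T%:Z * m%:Z + (Y + k%:Z) by rewrite PoszM; ring.
  rewrite divzMDl; [ring | by rewrite eqz_nat -lt0n].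
under eq_bigr => k _ do rewrite E.
rewrite sumrB sumr_const card_ord.
have -> : \sum_(i < m) ((W + i) %/ m)%N%:Z = (\sum_(i < m) ((W + i) %/ m))%N%:Z.
  by rewrite -natz natr_sum; apply: eq_bigr => i _; rewrite natz.
rewrite hermite_nat // -HW' PoszM -mulrz_nat; ring.
Qed.

Lemma odd_succ (w : int) : odd (absz (w + 1)) = ~~ odd (absz w).
Proof.
case: w => [w|w] /=; first by rewrite addn1.
have -> : Negz w + 1 = - w%:Z by rewrite NegzE; lia.
by rewrite abszN /= negbK.
Qed.

Definition bz (m : nat) (z : int) : bool := odd (absz (z %/ m%:Z)%Z).

Lemma step_ind (q1 q2 : int) : q1 <= q2 -> q2 <= q1 + 1 ->
  q2 - q1 <= ((~~ odd (absz q1) && odd (absz q2)) + (odd (absz q1) && ~~ odd (absz q2)))%N%:Z.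
Proof.
move=> L1 L2.
have [->|Hne] := eqVneq q2 q1; first by rewrite subrr.
have -> : q2 = q1 + 1 by lia.
rewrite odd_succ addrAC subrr add0r; by case: (odd (absz q1)).
Qed.

Lemma arc_int (m : nat) (X Y : int) : (0 < m)%N -> 0 <= Y - X <= m%:Z ->
  Y - X <= \sum_(k < m) ((~~ bz m (X + k%:Z) && bz m (Y + k%:Z)) +
                        (bz m (X + k%:Z) && ~~ bz m (Y + k%:Z)))%N%:Z.
Proof.
move=> Hm /andP[H1 H2].
have -> : Y - X = \sum_(k < m) (((Y + k%:Z) %/ m%:Z)%Z - ((X + k%:Z) %/ m%:Z)%Z).
  by rewrite sumrB !hermite_int.
apply: ler_sum => k _.
have Hm0 : (0 <= m%:Z) by rewrite lez_nat.
rewrite /bz; apply: step_ind.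
- by apply: lez_pdiv2r => //; rewrite lerD2r -subr_ge0.
- have -> : ((X + k%:Z) %/ m%:Z)%Z + 1 = ((1 * m%:Z + (X + k%:Z)) %/ m%:Z)%Z.
    rewrite divzMDl; first by rewrite addrC.
    by rewrite eqz_nat -lt0n.
  apply: lez_pdiv2r => //; rewrite mul1r addrA lerD2r -lerBlDr //.
Qed.

Definition cval {R : realType} (v : R) : R := if v <= 1 then Num.max v 0 else 0.

Lemma cval_ge0 (R : realType) (v : R) : 0 <= cval v.
Proof. rewrite /cval; case: ifP => _ //; by rewrite le_max lexx orbT. Qed.

Lemma cval_le1 (R : realType) (v : R) : cval v <= 1.
Proof. rewrite /cval; case: ifP => H //; by rewrite ge_max H ler01. Qed.

Lemma profit_split (R : realType) n h E (g : nat -> R) :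
  profit_coup n E g = \sum_(e <- E_in n h E) cval (pe n g e) + \sum_(e <- E_out n h E) cval (pe n g e).
Proof. by rewrite /profit_coup (bigID (fun e => in_cust n e h)) /= !big_filter. Qed.

Lemma out_price (R : realType) n h E (e : customer) (g u : nat -> R) :
  (1 <= h <= n)%N -> e \in E_out n h E -> valid_cust n e ->
  (forall j, (j < size (Vout n h E))%N -> g (nth 0%N (Vout n h E) j) = u j.+1 - u j) ->
  pe n g e = u (dag_arc n h E e).2 - u (dag_arc n h E e).1.
Proof.
move=> Hh He Hv Hg.
have Hne : ~~ in_cust n e h by move: He; rewrite mem_filter => /andP[].
rewrite /pe.
transitivity (\sum_(1 <= i < n.+1 | in_cust n e i && (i \in Vout n h E)) g i).
  rewrite big_nat_cond [RHS]big_nat_cond; apply: eq_bigl => i.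
  case Hr: (1 <= i < n.+1)%N => //=.
  case Hi: (in_cust n e i) => //=; symmetry.
  rewrite /Vout mem_filter; apply/andP; split.
    by apply/hasP; exists e.
  apply: line_mem; [exact: Hh | by move: Hr; clear; lia | ].
  by apply/eqP => Eih; move: Hne; rewrite -Eih Hi.
rewrite -sum_vo // (@block_sum R (Vout n h E) (in_cust n e) g u) //.
apply: convex_vo => //; exact: out_conv.
Qed.

Lemma in_price (R : realType) n h e (g : nat -> R) :
  (1 <= h <= n)%N -> in_cust n e h ->
  pe n g e = g h + \sum_(1 <= i < n.+1 | in_cust n e i && (i != h)) g i.
Proof.
move=> Hh Hi; rewrite /pe big_mkcond (bigD1_seq h) /=; last exact: iota_uniq.
  rewrite Hi; congr (_ + _); rewrite [RHS]big_mkcond [LHS]big_mkcond.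
  by apply: eq_bigr => i _; case: (i != h); case: (in_cust n e i).
by rewrite mem_index_iota; lia.
Qed.

Lemma tau_vo (R : realType) n h E B (y : R) j :
  (1 <= h <= n)%N -> (j < size (Vout n h E))%N ->
  tau_price n h E B y (nth 0%N (Vout n h E) j) = (B j.+1)%:R - (B j)%:R.
Proof.
move=> Hh Hj; rewrite /tau_price.
have Hm := mem_nth 0%N Hj.
have /andP[_ Hneq] := @vo_mem n h E Hh _ Hm.
rewrite (negbTE Hneq) Hm index_uniq //; exact: vo_uniq.
Qed.

Arguments cval_ge0 {R}.
Arguments cval_le1 {R}.

Lemma count_sum (R : realType) (T : eqType) (L : seq T) (F : T -> R) (P : pred T) :
  (forall e, e \in L -> F e = (P e)%:R) -> \sum_(e <- L) F e = (count P L)%:R.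
Proof.
elim: L => [|a L IH] H; first by rewrite big_nil.
rewrite big_cons /= natrD H ?mem_head //; congr (_ + _).
apply: IH => e He; apply: H; by rewrite in_cons He orbT.
Qed.

Lemma sum_const_seq (R : realType) (T : Type) (L : seq T) (c : R) :
  \sum_(e <- L) c = (size L)%:R * c.
Proof.
elim: L => [|a L IH]; first by rewrite big_nil mul0r.
by rewrite big_cons IH /= -add1n natrD; ring.
Qed.

Lemma cval1 (R : realType) : cval (1 : R) = 1.
Proof. by rewrite /cval lexx; apply/max_idPl; exact: ler01. Qed.

Lemma four (R : realType) (t : R) : (t = -1 \/ t = 0 \/ t = 1 \/ t = 2) ->
  1 <= cval (-1 + t) + cval (0 + t) + cval (1 + t) + cval (2 + t).
Proof.
move=> Ht; have := cval_ge0 (-1 + t); have := cval_ge0 (0 + t);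
have := cval_ge0 (1 + t); have := cval_ge0 (2 + t).
case: Ht => [->|[->|[->|->]]] => H1 H2 H3 H4.
- have -> : 2 + -1 = 1 :> R by ring. rewrite cval1; lra.
- have -> : 1 + 0 = 1 :> R by ring. rewrite cval1; lra.
- have -> : 0 + 1 = 1 :> R by ring. rewrite cval1; lra.
- have -> : -1 + 2 = 1 :> R by ring. rewrite cval1; lra.
Qed.

Lemma four_b (R : realType) (b1 b2 b3 : bool) (t : R) :
  t = b1%:R - (b2%:R - b3%:R) ->
  1 <= cval (-1 + t) + cval (0 + t) + cval (1 + t) + cval (2 + t).
Proof.
move=> ->; apply: four.
case: b1; case: b2; case: b3 => /=; lra.
Qed.

Lemma in_tau (R : realType) n h E B (y : R) e :
  (1 <= h <= n)%N -> B 0%N = false -> valid_cust n e -> in_cust n e h ->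
  pe n (tau_price n h E B y) e =
  y + ((B (size (Vout n h E)))%:R - (B 0%N)%:R -
       ((B (find (fun i => ~~ in_cust n e i) (Vout n h E) + count (fun i => ~~ in_cust n e i) (Vout n h E))%N)%:R
        - (B (find (fun i => ~~ in_cust n e i) (Vout n h E)))%:R)).
Proof.
move=> Hh HB0 Hv Hi.
rewrite (@in_price R n h e) // {1}/tau_price eqxx; congr (_ + _).
set vo := Vout n h E.
transitivity (\sum_(1 <= i < n.+1 | in_cust n e i && (i \in vo)) tau_price n h E B y i).
  rewrite (bigID (fun i => i \in vo)) /= [X in _ + X]big1 ?addr0.
    apply: eq_bigl => i; case Hvi: (i \in vo); rewrite ?andbF ?andbT //.
    by have /andP[_ ->] := @vo_mem n h E Hh _ Hvi; rewrite andbT.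
  move=> i /andP[/andP[_ Hne] Hnv]; rewrite /tau_price (negbTE Hne).
  by rewrite -/vo (negbTE Hnv).
rewrite -sum_vo //.
have Hg : forall j, (j < size vo)%N -> tau_price n h E B y (nth 0%N vo j) = (B j.+1)%:R - (B j)%:R.
  by move=> j Hj; apply: tau_vo.
have Hfull := @full_sum R vo _ _ Hg.
rewrite (bigID (fun i => in_cust n e i)) /= in Hfull.
have Hb := @block_sum R vo (fun i => ~~ in_cust n e i) _ (fun j => (B j)%:R) _ Hg.
rewrite Hb in Hfull; last first.
  apply: convex_vo => //; move=> j1 j2 j3 H1 H2 H3 H4; exact: in_conv.
rewrite -Hfull; ring.
Qed.

Lemma cval_b (R : realType) (b1 b2 : bool) :
  cval ((b2%:R : R) - b1%:R) = (~~ b1 && b2)%:R.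
Proof.
by rewrite /cval; case: b1; case: b2 => /=; rewrite ifT; try lra;
  rewrite /Num.max; case: ltrP => H; lra.
Qed.

Definition indk (m : nat) (X Y : int) (k : nat) : nat :=
  ((~~ bz m (X + k%:Z) && bz m (Y + k%:Z)) + (bz m (X + k%:Z) && ~~ bz m (Y + k%:Z)))%N.

Lemma arc_real (R : realType) (m : nat) (x y : R) : (0 < m)%N ->
  m%:R * cval (y - x) - 1 <=
  \sum_(k < m) (indk m (Num.floor (m%:R * x)) (Num.floor (m%:R * y)) k)%:R.
Proof.
move=> Hm.
have Hs : 0 <= \sum_(k < m) (indk m (Num.floor (m%:R * x)) (Num.floor (m%:R * y)) k)%:R :> R.
  by apply: sumr_ge0 => k _; exact: ler0n.
rewrite /cval; case: ifP => Hd1; last by rewrite mulr0 sub0r; lra.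
have [Hd0|Hd0] := lerP 0 (y - x); last first.
  by rewrite mulr0 sub0r; lra.
set X := Num.floor (m%:R * x); set Y := Num.floor (m%:R * y).
have Hm0 : (0 : R) < m%:R by rewrite ltr0n.
have HXY : X <= Y.
  apply: le_floor; apply: ler_wpM2l; [exact: ltW | lra].
have HY : Y%:~R <= m%:R * y by apply: real_floor_le; exact: num_real.
have HX : m%:R * x < (X + 1)%:~R by apply: real_floorD1_gt; exact: num_real.
have HYX : Y - X <= m%:Z.
  have H1 : (Y - X)%:~R < (m%:Z + 1)%:~R :> R.
    rewrite !intrD ?intrN /=.
    have : m%:R * (y - x) <= m%:R :> R by rewrite -{2}[m%:R]mulr1; apply: ler_wpM2l; [exact: ltW|].
    rewrite intrD in HX. move: HX HY; rewrite /= => HX HY. 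
    have -> : ((m%:Z)%:~R : R) = m%:R by [].
    nra.
  rewrite ltr_int in H1; lia.
have HI := @arc_int m X Y Hm.
have HI' : Y - X <= (\sum_(k < m) indk m X Y k)%N%:Z.
  have -> : (\sum_(k < m) indk m X Y k)%N%:Z = \sum_(k < m) (indk m X Y k)%:Z.
    by rewrite -natz natr_sum; apply: eq_bigr => i _; rewrite natz.
  apply: HI; apply/andP; split; [by rewrite subr_ge0 | exact: HYX].
have HR : (Y - X)%:~R <= (\sum_(k < m) indk m X Y k)%N%:R :> R.
  by rewrite -[X in _ <= X]/(((\sum_(k < m) indk m X Y k)%N%:Z)%:~R) ler_int.
rewrite natr_sum in HR.
rewrite intrB in HR. rewrite intrD in HX.
have HY2 : m%:R * y < (Y + 1)%:~R by apply: real_floorD1_gt; exact: num_real.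
have HX2 : X%:~R <= m%:R * x by apply: real_floor_le; exact: num_real.
rewrite intrD in HY2.
have E1 : ((1:int)%:~R : R) = 1 by []. rewrite E1 in HY2. rewrite mulrBr.
lra.
Qed.

Lemma valid_of n h E e : all (valid_cust n) E -> e \in E_out n h E -> valid_cust n e.
Proof. move=> /allP HE; rewrite mem_filter => /andP[_ He]; exact: HE. Qed.

Lemma valid_in n h E e : all (valid_cust n) E -> e \in E_in n h E -> valid_cust n e /\ in_cust n e h.
Proof. move=> /allP HE; rewrite mem_filter => /andP[Hi He]; split => //; exact: HE. Qed.

Lemma tau_out (R : realType) n h E B (y : R) :
  all (valid_cust n) E -> (1 <= h <= n)%N ->
  \sum_(e <- E_out n h E) cval (pe n (tau_price n h E B y) e) = (dicut_value n h E B)%:R.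
Proof.
move=> HE Hh; rewrite /dicut_value; apply: count_sum => e He.
rewrite (@out_price R n h E e _ (fun j => (B j)%:R)) //; last first.
  by move=> j Hj; apply: tau_vo.
  exact: (@valid_of n h E e HE He).
by rewrite cval_b.
Qed.

Lemma sigma_lb (R : realType) n h E :
  (1 <= h <= n)%N ->
  (size (E_in n h E))%:R <= profit_coup n E (sigma_price R h).
Proof.
move=> Hh; rewrite (@profit_split R n h E).
have H0 : 0 <= \sum_(e <- E_out n h E) cval (pe n (sigma_price R h) e).
  by apply: sumr_ge0 => e _; exact: cval_ge0.
have -> : \sum_(e <- E_in n h E) cval (pe n (sigma_price R h) e) = \sum_(e <- E_in n h E) 1.
  apply: eq_big_seq => e; rewrite mem_filter => /andP[Hi _].
  rewrite (@in_price R n h e) // big1 ?addr0; first by rewrite /sigma_price eqxx cval1.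
  by move=> i /andP[_ Hne]; rewrite /sigma_price (negbTE Hne).
rewrite sum_const_seq mulr1; lra.
Qed.

Lemma tau_lb (R : realType) n h E B (x : R) :
  all (valid_cust n) E -> (1 <= h <= n)%N -> B 0%N = false ->
  (forall y : R, y \in [:: -1; 0; 1; 2] ->
      profit_coup n E (tau_price n h E B y) <= profit_coup n E (tau_price n h E B x)) ->
  4 * (dicut_value n h E B)%:R + (size (E_in n h E))%:R <= 4 * profit_coup n E (tau_price n h E B x).
Proof.
move=> HE Hh HB0 Hmax.
set vo := Vout n h E.
pose T (e : customer) : R := (B (size vo))%:R - (B 0%N)%:R -
       ((B (find (fun i => ~~ in_cust n e i) vo + count (fun i => ~~ in_cust n e i) vo)%N)%:R
        - (B (find (fun i => ~~ in_cust n e i) vo))%:R).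
have HP : forall y : R, profit_coup n E (tau_price n h E B y) =
   \sum_(e <- E_in n h E) cval (y + T e) + (dicut_value n h E B)%:R.
  move=> y; rewrite (@profit_split R n h E) tau_out //; congr (_ + _).
  apply: eq_big_seq => e He; have [Hv Hi] := @valid_in n h E e HE He.
  by rewrite in_tau.
have Hsum : (size (E_in n h E))%:R <=
   \sum_(e <- E_in n h E) cval (-1 + T e) + \sum_(e <- E_in n h E) cval (0 + T e)
   + \sum_(e <- E_in n h E) cval (1 + T e) + \sum_(e <- E_in n h E) cval (2 + T e).
  rewrite -!big_split /= -[X in X <= _]mulr1 -sum_const_seq.
  apply: ler_sum => e _; apply: (@four_b R (B (size vo))
     (B (find (fun i => ~~ in_cust n e i) vo + count (fun i => ~~ in_cust n e i) vo)%N)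
     (B (find (fun i => ~~ in_cust n e i) vo))).
  by rewrite /T HB0 subr0.
have H1 := Hmax (-1) ltac:(by rewrite inE eqxx).
have H2 := Hmax 0 ltac:(by rewrite !inE eqxx orbT).
have H3 := Hmax 1 ltac:(by rewrite !inE eqxx !orbT).
have H4 := Hmax 2 ltac:(by rewrite !inE eqxx !orbT).
rewrite !HP in H1 H2 H3 H4 *. lra.
Qed.

Lemma q_bound_m (R : realType) n h E (Bset : nat -> bool) (q : nat -> R) (m : nat) :
  all (valid_cust n) E -> (1 <= h <= n)%N -> (0 < m)%N ->
  (forall B' : nat -> bool,
      FG_ratio * (dicut_value n h E B')%:R <= (dicut_value n h E Bset)%:R :> R) ->
  FG_ratio * (m%:R * \sum_(e <- E_out n h E) cval (pe n q e) - (size (E_out n h E))%:R)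
   <= 2 * m%:R * (dicut_value n h E Bset)%:R.
Proof.
move=> HE Hh Hm HFG.
set vo := Vout n h E.
pose S j := \sum_(0 <= i < j) q (nth 0%N vo i).
have Hg : forall j, (j < size vo)%N -> q (nth 0%N vo j) = S j.+1 - S j.
  by move=> j _; rewrite /S big_nat_recr //=; ring.
pose Bk (k : nat) := fun j => bz m (Num.floor (m%:R * S j) + k%:Z).
have Step1 : m%:R * \sum_(e <- E_out n h E) cval (pe n q e) - (size (E_out n h E))%:R
   <= \sum_(k < m) ((dicut_value n h E (Bk k))%:R + (dicut_value n h E (fun j => ~~ Bk k j))%:R).
  rewrite mulr_sumr -[X in _ - X]mulr1 -sum_const_seq -sumrB.
  apply: le_trans (_ : \sum_(e <- E_out n h E) \sum_(k < m)
      (indk m (Num.floor (m%:R * S (dag_arc n h E e).1)) (Num.floor (m%:R * S (dag_arc n h E e).2)) k)%:R <= _).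
    rewrite big_seq [X in _ <= X]big_seq; apply: ler_sum => e He.
    rewrite (@out_price R n h E e q S) //; last exact: (@valid_of n h E e HE He).
    exact: arc_real.
  rewrite exchange_big /=; apply: ler_sum => k _.
  rewrite /dicut_value.
  set P1 := (fun e => _ && _).
  set P2 := (fun e => _ && _).
  rewrite -(@count_sum R _ _ (fun e => (P1 e)%:R) P1) // -(@count_sum R _ _ (fun e => (P2 e)%:R) P2) //.
  rewrite -big_split /=; apply: ler_sum => e _; rewrite /indk natrD /P1 /P2 /Bk negbK.
  done.
have HF : (0 : R) <= FG_ratio by rewrite /FG_ratio divr_ge0 // ler0n.
apply: le_trans (ler_wpM2l HF Step1) _.
rewrite mulr_sumr.
apply: le_trans (_ : \sum_(k < m) (2 * (dicut_value n h E Bset)%:R) <= _).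
  apply: ler_sum => k _; rewrite mulrDr.
  have := HFG (Bk k); have := HFG (fun j => ~~ Bk k j); lra.
rewrite sumr_const card_ord -mulr_natr; lra.
Qed.

Lemma q_bound (R : realType) n h E (Bset : nat -> bool) (q : nat -> R) :
  all (valid_cust n) E -> (1 <= h <= n)%N ->
  (forall B' : nat -> bool,
      FG_ratio * (dicut_value n h E B')%:R <= (dicut_value n h E Bset)%:R :> R) ->
  FG_ratio * \sum_(e <- E_out n h E) cval (pe n q e) <= 2 * (dicut_value n h E Bset)%:R.
Proof.
move=> HE Hh HFG.
set C := \sum_(e <- E_out n h E) cval (pe n q e).
set D : R := (dicut_value n h E Bset)%:R.
set s : R := (size (E_out n h E))%:R.
have HF : (0 : R) < FG_ratio by rewrite /FG_ratio divr_gt0 // ltr0n.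
have Hs : (0 : R) <= s by exact: ler0n.
rewrite leNgt; apply/negP => Hlt.
set d := FG_ratio * C - 2 * D.
have Hd : 0 < d by rewrite /d subr_gt0.
set t := FG_ratio * s / d.
have Ht0 : 0 <= t by rewrite /t; apply: divr_ge0; [apply: mulr_ge0 => //; exact: ltW | exact: ltW].
have Htm := archi_boundP Ht0.
have Hm0 : (0 < Num.Def.archi_bound t)%N by [].
have Hq := @q_bound_m R n h E Bset q _ HE Hh Hm0 HFG.
move: Htm Hq; set m := Num.Def.archi_bound t => Htm Hq.
have Htd : t * d = FG_ratio * s by rewrite /t mulfVK // gt_eqF.
rewrite -/C -/D -/s in Hq.
have : (m%:R : R) * d <= FG_ratio * s by rewrite /d; nra.
nra.
Qed.

Theorem theorem5 (R : realType) (n : nat) (E : seq customer)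
  (h : nat) (Bset : nat -> bool) (x : R) (p : nat -> R) :
  all (valid_cust n) E ->
  (1 <= h <= n)%N ->
  Bset 0%N = false ->
  (forall B' : nat -> bool,
      FG_ratio * (dicut_value n h E B')%:R <= (dicut_value n h E Bset)%:R :> R) ->
  x \in [:: -1; 0; 1; 2] ->
  (forall y : R, y \in [:: -1; 0; 1; 2] ->
      profit_coup n E (tau_price n h E Bset y) <= profit_coup n E (tau_price n h E Bset x)) ->
  (p = sigma_price R h \/ p = tau_price n h E Bset x) ->
  profit_coup n E (sigma_price R h) <= profit_coup n E p ->
  profit_coup n E (tau_price n h E Bset x) <= profit_coup n E p ->
  forall q : nat -> R, profit_coup n E q <= (2747%:R / 1000%:R) * profit_coup n E p.
Proof.
move=> HE Hh HB0 HFG _ Hmax _ Hs Ht q.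
have H1 := @sigma_lb R n h E Hh.
have H2 := @tau_lb R n h E Bset x HE Hh HB0 Hmax.
have H3 := @q_bound R n h E Bset q HE Hh HFG.
have H4 : \sum_(e <- E_in n h E) cval (pe n q e) <= (size (E_in n h E))%:R.
  rewrite -[X in _ <= X]mulr1 -sum_const_seq; apply: ler_sum => e _; exact: cval_le1.
have H5 : (0 : R) <= (dicut_value n h E Bset)%:R by exact: ler0n.
have H6 : (0 : R) <= (size (E_in n h E))%:R by exact: ler0n.
rewrite (@profit_split R n h E).
move: H1 H2 H3 H4 H5 H6 Hs Ht; rewrite /FG_ratio.
set A := (size (E_in n h E))%:R; set D := (dicut_value n h E Bset)%:R.
set I := \sum_(e <- E_in n h E) _; set O := \sum_(e <- E_out n h E) _.
move=> *. lra.
Qed.
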